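(* Let $p\in\mathcal{P}_\tau$ and $1\le i\le N$. Then $\mathcal{D}_ip=0$ if and only if $\mathcal{U}_ip=p+\kappa\,\omega_ip$.
   Context: $\tau$ is a partition of $N$ and $\tau$ also denotes an irreducible representation of the symmetric group $\mathcal{S}_N$ on a vector space $V_\tau$ (over $\mathbb{R}(\kappa)$, $\kappa$ a parameter). $\mathcal{P}_\tau=\mathcal{P}\otimes V_\tau$ is the space of $V_\tau$-valued polynomials in $x=(x_1,\dots,x_N)$, with $\mathcal{S}_N$-action $wp(x)=\tau(w)p(xw)$ where $(xw)_i=x_{w(i)}$; $(i,j)$ denotes a transposition and $x(i,j)$ the vector $x$ with $x_i,x_j$ interchanged. Dunkl operators: $\mathcal{D}_i(p(x)\otimes T)=\frac{\partial p}{\partial x_i}\otimes T+\kappa\sum_{j\ne i}\frac{p(x)-p(x(i,j))}{x_i-x_j}\otimes\tau((i,j))T$; Cherednik–Dunkl operators: $\mathcal{U}_i(p(x)\otimes T)=\mathcal{D}_i(x_ip(x)\otimes T)-\kappa\sum_{j=1}^{i-1}p(x(i,j))\otimes\tau((i,j))T$ (both extended linearly). The Jucys–Murphy elements are $\omega_i=\sum_{j=i+1}^N(i,j)$ for $1\le i<N$ and $\omega_N=0$, acting on $\mathcal{P}_\tau$ through the $\mathcal{S}_N$-action. *)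

(* Defs.v *)
From HB Require Import structures.
From mathcomp Require Import all_boot all_order all_algebra all_fingroup all_character.
From mathcomp Require Import fraction.
From mathcomp Require Import mpoly.
From mathcomp Require Import reals.
From Stdlib Require Import ClassicalEpsilon.
Set Implicit Arguments. Unset Strict Implicit. Unset Printing Implicit Defensive.
Import Order.TTheory GRing.Theory Num.Theory.
Local Open Scope ring_scope.

Definition Rk (R : realType) := {fraction {poly R}}.
Definition kappa (R : realType) : Rk R := tofrac ('X : {poly R}).

Section Dunkl.
Variables (F : fieldType) (N n : nat).
Variable rG : mx_representation F [set: 'S_N] n.
Variable k : F.

(* P_tau = P (x) V_tau, with V_tau = 'rV[F]_n : a V_tau-valued polynomial is
   the row of its n coordinate polynomials. *)
Definition Ptau := 'rV[{mpoly F[N]}]_n.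

(* tau(w) as a left action on V_tau = 'rV_n (mx_representation acts on the right) *)
Definition tau (w : 'S_N) : 'M[F]_n := rG (w^-1)%g.

Definition actV (A : 'M[F]_n) (P : Ptau) : Ptau :=
  P *m map_mx (fun c : F => c%:MP) A.

(* p(xw) with (xw)_i = x_{w(i)} : msym w replaces 'X_i by 'X_(w i) *)
Definition subst (w : 'S_N) (P : Ptau) : Ptau := map_mx (msym w) P.

Definition Sact (w : 'S_N) (P : Ptau) : Ptau := actV (tau w) (subst w P).

(* the divided difference (q(x) - q(x(i,j))) / (x_i - x_j), i.e. the unique
   polynomial r with (x_i - x_j) r = q(x) - q(x(i,j)) *)
Definition divdiff (i j : 'I_N) (q : {mpoly F[N]}) : {mpoly F[N]} :=
  epsilon (inhabits 0)
    (fun r => ('X_i - 'X_j) * r = q - msym (tperm i j) q).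

Definition Dunkl (i : 'I_N) (P : Ptau) : Ptau :=
  map_mx (mderiv i) P
  + k%:MP *: \sum_(j < N | j != i) actV (tau (tperm i j)) (map_mx (divdiff i j) P).

Definition CDunkl (i : 'I_N) (P : Ptau) : Ptau :=
  Dunkl i ('X_i *: P)
  - k%:MP *: \sum_(j < N | (j < i)%N) actV (tau (tperm i j)) (subst (tperm i j) P).

(* Jucys-Murphy element omega_i = sum_{j > i} (i,j), acting through Sact
   (omega_N = 0 is the empty sum) *)
Definition omega (i : 'I_N) (P : Ptau) : Ptau :=
  \sum_(j < N | (i < j)%N) Sact (tperm i j) P.

End Dunkl.

(* Main.v *)
Require Import Defs.
From HB Require Import structures.
From mathcomp Require Import all_boot all_order all_algebra all_fingroup all_character.
From mathcomp Require Import fraction mpoly reals ring.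
From Stdlib Require Import ClassicalEpsilon.
Import GRing.Theory.
Local Open Scope ring_scope.
Set Implicit Arguments. Unset Strict Implicit.

Section Aux.
Variables (F : fieldType) (N : nat).
Implicit Types (q r : {mpoly F[N]}).

Lemma msymXi (s : 'S_N) (i : 'I_N) : msym s 'X_i = 'X_(s i) :> {mpoly F[N]}.
Proof.
rewrite msymX; congr (mpolyX _ _); apply/mnmP=> k; rewrite !mnmE.
by rewrite -(inj_eq (@perm_inj _ s)) permKV.
Qed.

Lemma X_neq0 (i : 'I_N) : ('X_i : {mpoly F[N]}) != 0.
Proof.
apply/eqP => h; have := congr1 (mcoeff U_(i)) h.
by rewrite mcoeffXU eqxx mcoeff0 => /eqP; rewrite oner_eq0.
Qed.

Lemma XB_neq0 (i j : 'I_N) : i != j -> ('X_i - 'X_j : {mpoly F[N]}) != 0.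
Proof.
move=> ij; apply/eqP => /eqP; rewrite subr_eq0 => /eqP h.
have := congr1 (mcoeff U_(i)) h.
by rewrite !mcoeffXU eqxx eq_sym (negbTE ij) => /eqP; rewrite oner_eq0.
Qed.

Definition DDP (i j : 'I_N) q := exists r, ('X_i - 'X_j) * r = q - msym (tperm i j) q.

Lemma DDP_add i j q1 q2 : DDP i j q1 -> DDP i j q2 -> DDP i j (q1 + q2).
Proof. move=> [r1 h1] [r2 h2]; exists (r1 + r2); rewrite mulrDr h1 h2 msymD; ring. Qed.

Lemma DDP_mul i j q1 q2 : DDP i j q1 -> DDP i j q2 -> DDP i j (q1 * q2).
Proof.
move=> [r1 h1] [r2 h2]; exists (r1 * q2 + msym (tperm i j) q1 * r2).
rewrite mulrDr mulrA h1 mulrCA h2 msymM; ring.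
Qed.

Lemma DDP_scale i j c q : DDP i j q -> DDP i j (c *: q).
Proof. move=> [r h]; exists (c *: r); rewrite -scalerAr h msymZ scalerBr //. Qed.

Lemma DDP_1 i j : DDP i j 1.
Proof. by exists 0; rewrite msym1 subrr mulr0. Qed.

Lemma DDP_X i j k : DDP i j 'X_k.
Proof.
rewrite /DDP msymXi.
case: (eqVneq k i) => [->|ki]; first by exists 1; rewrite tpermL mulr1.
case: (eqVneq k j) => [->|kj]; first by exists (-1); rewrite tpermR mulrN1 opprB.
by exists 0; rewrite tpermD 1?eq_sym // subrr mulr0.
Qed.

Lemma DDP_all i j q : DDP i j q.
Proof.
rewrite (mpolyE q); elim/big_ind: _ => //.
- by exists 0; rewrite msym0 subrr mulr0.
- exact: DDP_add.
move=> m _; apply: DDP_scale; rewrite mpolyXE_id.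
elim/big_ind: _ => //; [exact: DDP_1 | exact: DDP_mul|].
move=> k _; elim: (m k) => [|e IH]; first exact: DDP_1.
by rewrite exprS; apply: DDP_mul => //; apply: DDP_X.
Qed.

Lemma dd_spec i j q : ('X_i - 'X_j) * divdiff i j q = q - msym (tperm i j) q.
Proof. have [r h] := DDP_all i j q; rewrite /divdiff; apply: (epsilon_spec _ (fun r0 => (_ : {mpoly F[N]}) * r0 = _)); by exists r. Qed.

Lemma dd_X i j q : i != j ->
  divdiff i j ('X_i * q) = 'X_i * divdiff i j q + msym (tperm i j) q.
Proof.
move=> ij; apply: (mulfI (XB_neq0 ij)).
rewrite dd_spec mulrDr mulrCA dd_spec msymM msymXi tpermL; ring.
Qed.

Lemma der_X i q : mderiv i ('X_i * q) = q + 'X_i * mderiv i q.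
Proof.
rewrite mderivM mderivX mnm1E eqxx.
have ->: (U_(i) - U_(i) = 0 :> 'X_{1..N})%MM by apply/mnmP=> k; rewrite !mnmE subnn.
by rewrite mpolyX0 scale1r mul1r.
Qed.
End Aux.
Section Main.
Variables (F : fieldType) (N n : nat).
Variable rG : mx_representation F [set: 'S_N] n.
Variable k : F.
Implicit Types (P Q : Ptau F N n).

Lemma actVD A P Q : actV A (P + Q) = actV A P + actV A Q.
Proof. by rewrite /actV mulmxDl. Qed.
Lemma actVZ A c P : actV A (c *: P) = c *: actV A P.
Proof. by rewrite /actV scalemxAl. Qed.

Lemma map_dd i j P : i != j ->
  map_mx (divdiff i j) ('X_i *: P) = 'X_i *: map_mx (divdiff i j) P + subst (tperm i j) P.
Proof. by move=> ij; apply/matrixP=> a b; rewrite !mxE dd_X. Qed.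

Lemma map_der i P : map_mx (mderiv i) ('X_i *: P) = P + 'X_i *: map_mx (mderiv i) P.
Proof. by apply/matrixP=> a b; rewrite !mxE der_X. Qed.

Lemma Dunkl_X i P : Dunkl rG k i ('X_i *: P) = P + 'X_i *: Dunkl rG k i P +
  k%:MP *: \sum_(j < N | j != i) actV (tau rG (tperm i j)) (subst (tperm i j) P).
Proof.
rewrite /Dunkl map_der.
under eq_bigr => j hj do rewrite map_dd 1?eq_sym // actVD actVZ.
rewrite big_split /= -scaler_sumr !scalerDr scalerA [k%:MP * _]mulrC -scalerA.
by rewrite !addrA.
Qed.

Lemma CDunkl_eq i P : CDunkl rG k i P = P + 'X_i *: Dunkl rG k i P + k%:MP *: omega rG i P.
Proof.
rewrite /CDunkl Dunkl_X (bigID (fun j : 'I_N => (j < i)%N)) /=.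
rewrite (@eq_bigl _ _ _ _ _ (fun j : 'I_N => (j != i) && (j < i)%N) (fun j : 'I_N => (j < i)%N)); last first.
  by move=> j /=; rewrite -(inj_eq val_inj) /=; case: ltngtP.
rewrite (@eq_bigl _ _ _ _ _ (fun j : 'I_N => (j != i) && ~~ (j < i)%N) (fun j : 'I_N => (i < j)%N)); last first.
  by move=> j /=; rewrite -(inj_eq val_inj) /=; case: ltngtP.
rewrite [k%:MP *: (_ + _)]scalerDr.
set A := k%:MP *: \sum_(j < N | (j < i)%N) _.
by rewrite [A + _]addrC addrA addrK.
Qed.

Lemma main_eq i P : Dunkl rG k i P = 0 <-> CDunkl rG k i P = P + k%:MP *: omega rG i P.
Proof.
rewrite CDunkl_eq; split => [->|h]; first by rewrite scaler0 addr0.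
have h2 : 'X_i *: Dunkl rG k i P = 0.
  by move: h; rewrite -addrA [_ *: Dunkl _ _ _ _ + _]addrC addrA -[RHS]addr0 => /addrI.
apply/matrixP=> a b; have := congr1 (fun M : Ptau F N n => M a b) h2.
by rewrite /= !mxE => /eqP; rewrite mulf_eq0 (negbTE (X_neq0 _ _)) /= => /eqP.
Qed.
End Main.

Theorem proposition6p1 (R : realType) (N n : nat)
    (rG : mx_representation (Rk R) [set: 'S_N] n) (irr : mx_irreducible rG)
    (p : Ptau (Rk R) N n) (i : 'I_N) :
  Dunkl rG (kappa R) i p = 0 <->
  CDunkl rG (kappa R) i p = p + (kappa R)%:MP *: omega rG i p.
Proof. exact: main_eq. Qed.
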